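(* Let $x$ be a grid function with $x_s\neq0$ at every node that satisfies the scheme (S) with $\check B=\frac{2(\cosh\tau-1)}{\tau^2}\,x$ (discretization for the parabolic bottom $b(x)=x^2/2$). Then at every node $$\Big(x\,\frac{e^{\hat t}-e^{t}}{\tau}-e^{t}x_t\Big)_{\check t}-\Big(e^{t}\big((\hat x_s\check x_s)^{-1}-\alpha^2x_s\big)\Big)_{\bar s}=0,$$ where $t$ is the time coordinate of the node and $\hat t=t+\tau$.
   Context: Fix mesh steps $\tau>0$, $h>0$ and a constant $\alpha\in\mathbb R$. A grid function is a real-valued function $f=f(t,s)$ on the uniform orthogonal mesh $\{(n\tau,kh): n,k\in\mathbb Z\}$; at the node $(n\tau,kh)$ the symbol $t$ denotes the number $n\tau$. Shifts: $\hat f=f(t+\tau,s)$, $\check f=f(t-\tau,s)$, $f_+=f(t,s+h)$, $f_-=f(t,s-h)$; a shift applied to a composite expression shifts the whole expression, including explicit occurrences of $t$ (e.g. $\hat x_s$ is $x_s$ evaluated at $(t+\tau,s)$). Differences: $f_t=(\hat f-f)/\tau$, $f_{\check t}=(f-\check f)/\tau$, $f_s=(f_+-f)/h$, $f_{\bar s}=(f-f_-)/h$; iterated differences compose, e.g. $x_{t\check t}=(x_t)_{\check t}=(\hat x-2x+\check x)/\tau^2$ and $x_{s\bar s}=(x_s)_{\bar s}=(x_+-2x+x_-)/h^2$. Given a grid function $x$ with $x_s\neq0$ everywhere and a grid function $\check B$ (an approximation of the bottom-slope term), the scheme (S) is the requirement that at every node $$x_{t\check t}-\alpha^2x_{s\bar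 s}+\Big(\frac{1}{\hat x_s\check x_s}\Big)_{\bar s}-\check B=0 .$$ *)

(* Defs.v *)
From Stdlib Require Import Reals ZArith.
Open Scope R_scope.

(* A grid function: value at node (n*tau, k*h) is f n k. *)
Definition grid := Z -> Z -> R.

Definition tnode (tau : R) (n : Z) : R := IZR n * tau.

Definition dt (tau : R) (f : grid) : grid :=
  fun n k => (f (n + 1)%Z k - f n k) / tau.
Definition dtb (tau : R) (f : grid) : grid :=
  fun n k => (f n k - f (n - 1)%Z k) / tau.
Definition ds (h : R) (f : grid) : grid :=
  fun n k => (f n (k + 1)%Z - f n k) / h.
Definition dsb (h : R) (f : grid) : grid :=
  fun n k => (f n k - f n (k - 1)%Z) / h.

Definition hat (f : grid) : grid := fun n k => f (n + 1)%Z k.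
Definition chk (f : grid) : grid := fun n k => f (n - 1)%Z k.

Definition scheme (tau h alpha : R) (x Bc : grid) : Prop :=
  forall n k : Z,
    dtb tau (dt tau x) n k - alpha ^ 2 * dsb h (ds h x) n k
    + dsb h (fun n' k' => / (hat (ds h x) n' k' * chk (ds h x) n' k')) n k
    - Bc n k = 0.

Definition Bpar (tau : R) (x : grid) : grid :=
  fun n k => 2 * (cosh tau - 1) / tau ^ 2 * x n k.

(* Main.v *)
Require Import Defs.
From Stdlib Require Import Reals ZArith Lra.
Open Scope R_scope.

Theorem mainTheorem5 (tau h alpha : R) (x : grid) :
  0 < tau -> 0 < h ->
  (forall n k : Z, ds h x n k <> 0) ->
  scheme tau h alpha x (Bpar tau x) ->
  forall n k : Z,
    dtb tau (fun n' k' =>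
        x n' k' * (exp (tnode tau (n' + 1)%Z) - exp (tnode tau n')) / tau
        - exp (tnode tau n') * dt tau x n' k') n k
    - dsb h (fun n' k' =>
        exp (tnode tau n') *
          (/ (hat (ds h x) n' k' * chk (ds h x) n' k') - alpha ^ 2 * ds h x n' k')) n k
    = 0.
Proof.
  intros Ht Hh _ HS n k.
  specialize (HS n k).
  unfold scheme, dtb, dt, dsb, Bpar in *.
  replace (n - 1 + 1)%Z with n in * by ring.
  assert (E1 : exp (tnode tau (n + 1)) = exp (tnode tau n) * exp tau).
  { rewrite <- exp_plus. f_equal. unfold tnode. rewrite plus_IZR. ring. }
  assert (E2 : exp (tnode tau (n - 1)) * exp tau = exp (tnode tau n)).
  { rewrite <- exp_plus. f_equal. unfold tnode. rewrite minus_IZR. ring. }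
  assert (C : cosh tau = (exp tau + / exp tau) / 2).
  { unfold cosh. rewrite exp_Ropp. reflexivity. }
  rewrite C in HS. rewrite E1.
  set (A := / (hat (ds h x) n k * chk (ds h x) n k)) in *.
  set (B := / (hat (ds h x) n (k - 1)%Z * chk (ds h x) n (k - 1)%Z)) in *.
  set (e := exp tau) in *. set (En := exp (tnode tau n)) in *.
  set (Em := exp (tnode tau (n - 1))) in *.
  assert (He : e <> 0) by (unfold e; apply Rgt_not_eq, exp_pos).
  assert (Hm : Em = En / e) by (rewrite <- E2; field; auto).
  rewrite Hm.
  assert (Htau : tau <> 0) by lra. assert (Hh0 : h <> 0) by lra.
  set (D := (A - B) / h) in *.
  replace ((En * (A - alpha ^ 2 * ds h x n k) - En * (B - alpha ^ 2 * ds h x n (k - 1)%Z)) / h)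
    with (En * (D - alpha^2 * ((ds h x n k - ds h x n (k-1)%Z)/h))) by (unfold D; field; auto).
  assert (HD : D = 2 * ((e + / e) / 2 - 1) / tau ^ 2 * x n k
     - ((x (n + 1)%Z k - x n k) / tau - (x n k - x (n - 1)%Z k) / tau) / tau
     + alpha ^ 2 * ((ds h x n k - ds h x n (k - 1)%Z) / h)).
  { lra. }
  rewrite HD. field. auto.
Qed.
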